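(* For each $0\le s\le L$, the space $V_L^s$ is stable under $Q(z;p)$, and $Q(z;p)|_{V_L^s}$ is a polynomial in $z$ of degree exactly $s$ with coefficients in $\mathrm{End}(V_L^s)[[p]]$.
   Context: All vector spaces are over $\mathbb C$. Let $V^\infty$ have basis $(w_i)_{i\in\mathbb Z_{\ge0}}$, graded with $w_i$ of weight $i$. For $\ell\in\mathbb C$, $\mathcal W^\ell$ denotes the representation of the Yangian-type algebra $\mathbb Y^1$ on $V^\infty$ given by the operators ($w_{-1}=0$): $t_{11}(z)w_i=(z+\ell-i)w_i$, $t_{12}(z)w_i=(\ell-i)w_{i+1}$, $t_{21}(z)w_i=iw_{i-1}$, $t_{22}(z)w_i=(z+i)w_i$, and $T^{\mathcal W^\ell}(z)=\sum_{i,j=1}^2E_{ij}\otimes t_{ij}(z)\in\mathrm{End}(\mathbb C^2\otimes V^\infty)[z]$ where $E_{ij}$ are the elementary matrices for a basis $(v_1,v_2)$ of $\mathbb C^2$ (these satisfy the RTT relation $R^{12}(z-w)T^{13}(z)T^{23}(w)=T^{23}(w)T^{13}(z)R^{12}(z-w)$ with Yang's $R(z)=\frac{z}{z+1}\mathrm{Id}+\frac{1}{z+1}P$, $P$ the flip). Fix $L\in\mathbb Z_{>0}$ and $a_1,\dots,a_L\in\mathbb C^\times$. Let $V_L=(\mathbb C^2)^{\otimes L}$ and, for $0\le s\le L$, let $V_L^s$ be the span of the $v_{i_1}\otimes\cdots\otimes v_{i_L}$ in which the index $1$ appears exactly $s$ times. For a graded module $W=\bigoplus_\alpha W_\alpha$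 with finite-dimensional weight spaces, weights bounded below, and $T^W(z)=\sum E_{ij}\otimes t^W_{ij}(z)$, the monodromy matrix is $T^{W,L}(z)=T^W(z+a_1)_{1,L+1}T^W(z+a_2)_{2,L+1}\cdots T^W(z+a_L)_{L,L+1}\in\mathrm{End}(V_L\otimes W)$, where the subscript $(l,L+1)$ means acting on the $l$-th factor of $V_L$ and on $W$, and the transfer matrix is $t_W(z;p)=\sum_{\alpha}p^\alpha(\mathrm{Id}_{V_L}\otimes\mathrm{Tr}_{W_\alpha})(T^{W,L}(z))$, $p$ a formal variable. The Baxter Q-operator is $Q(z;p):=t_{\mathcal W^z}(0;p)$, i.e. the transfer matrix of $\mathcal W^\ell$ evaluated at spectral parameter $0$ with spin parameter $\ell=z$; it lies in $\mathrm{End}(V_L)[z][[p]]$. *)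

(* Defs.v *)
From HB Require Import structures.
From mathcomp Require Import all_boot all_order all_algebra.
Set Implicit Arguments. Unset Strict Implicit. Unset Printing Implicit Defensive.
Import Order.TTheory GRing.Theory Num.Theory.
Local Open Scope ring_scope.

(* Conventions.
   - The basis (v_1, v_2) of C^2 is indexed by 'I_2 : ord0 <-> v_1, 1 <-> v_2.
   - A vector of V^infty (or rather of its completion) is a coefficient
     function c : nat -> P, c n = coefficient of w_n.  Coefficients live in
     P = {poly R}, the variable 'X being the polynomial variable z.
   - Basis vectors of V_L = (C^2)^{(x) L} are indexed by
     sigma : {ffun 'I_L -> 'I_2}, i.e. v_{sigma 1} (x) ... (x) v_{sigma L}.
   - A formal power series in p with coefficients in End(V_L)[z] is a
     function k |-> (matrix (sigma,tau) |-> entry in {poly R}). *)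

Section Defs.
Variable R : numClosedFieldType.
Local Notation P := {poly R}.

(* t_{ij}(z) of the module W^ell, acting on coefficient functions:
   t11(z) w_n = (z+ell-n) w_n,  t12(z) w_n = (ell-n) w_{n+1},
   t21(z) w_n = n w_{n-1},      t22(z) w_n = (z+n) w_n. *)
Definition Wop (ell z : P) (i j : 'I_2) (c : nat -> P) : nat -> P :=
  match val i, val j with
  | 0%N, 0%N => fun n => (z + ell - n%:R) * c n
  | 0%N, _ => fun n => if n is m.+1 then (ell - m%:R) * c m else 0
  | _, 0%N => fun n => (n.+1)%:R * c n.+1
  | _, _ => fun n => (z + n%:R) * c n
  end.

Definition wvec (k : nat) : nat -> P := fun n => if n == k then 1 else 0.

Definition monoEntry (L : nat) (ell z : P) (a : 'I_L -> R)
  (sigma tau : {ffun 'I_L -> 'I_2}) : (nat -> P) -> (nat -> P) :=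
  foldr (fun l f => Wop ell (z + (a l)%:P) (sigma l) (tau l) \o f) id
        (enum 'I_L).

(* coefficient of p^k of the transfer matrix t_{W^ell}(z;p):
   (sigma,tau) entry of (Id (x) Tr_{W_k}) T^{W^ell,L}(z); W_k = C w_k. *)
Definition transferCoef (L : nat) (ell z : P) (a : 'I_L -> R) (k : nat)
  (sigma tau : {ffun 'I_L -> 'I_2}) : P :=
  monoEntry ell z a sigma tau (wvec k) k.

(* Baxter Q-operator Q(z;p) = t_{W^z}(0;p): coefficient of p^k. *)
Definition Qcoef (L : nat) (a : 'I_L -> R) (k : nat)
  (sigma tau : {ffun 'I_L -> 'I_2}) : P :=
  transferCoef 'X 0 a k sigma tau.

End Defs.

Definition inSector (L s : nat) (sigma : {ffun 'I_L -> 'I_2}) : bool :=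
  #|[pred l | sigma l == ord0]| == s.

(* Main.v *)
Require Import Defs.
From HB Require Import structures.
From mathcomp Require Import all_boot all_order all_algebra.
From mathcomp Require Import ring zify.
Set Implicit Arguments. Unset Strict Implicit.
Import Order.TTheory GRing.Theory Num.Theory.
Local Open Scope ring_scope.

Definition Frec (R : numClosedFieldType) (L : nat) (a : 'I_L -> R)
  (sigma tau : {ffun 'I_L -> 'I_2}) (r : seq 'I_L) :=
  foldr (fun l f => Wop 'X (0 + (a l)%:P) (sigma l) (tau l) \o f) id r.

Lemma Qcoef_Frec (R : numClosedFieldType) (L : nat) (a : 'I_L -> R) k sigma tau :
  Qcoef a k sigma tau = Frec a sigma tau (enum 'I_L) (wvec R k) k.
Proof. by []. Qed.

Lemma Frec_cons (R : numClosedFieldType) (L : nat) (a : 'I_L -> R) sigma tau l r c :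
  Frec a sigma tau (l :: r) c =
  Wop 'X (0 + (a l)%:P) (sigma l) (tau l) (Frec a sigma tau r c).
Proof. by []. Qed.

Lemma Wop_supp (R : numClosedFieldType) (ell z : {poly R}) (i j : 'I_2) c n :
  Wop ell z i j c n != 0 ->
  exists m, c m != 0 /\ (n + (j == ord0) = m + (i == ord0))%N.
Proof.
case: i => [[|[|i]] Hi] //; case: j => [[|[|j]] Hj] //; rewrite /Wop /=.
- by move=> H; exists n; split => //; apply: contraNneq H => ->; rewrite mulr0.
- case: n => [|m]; first by rewrite eqxx.
  by move=> H; exists m; split => //; [apply: contraNneq H => ->; rewrite mulr0 | lia].
- by move=> H; exists n.+1; split => //; [apply: contraNneq H => ->; rewrite mulr0 | lia].
- by move=> H; exists n; split => //; apply: contraNneq H => ->; rewrite mulr0.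
Qed.

Lemma Frec_supp (R : numClosedFieldType) (L : nat) (a : 'I_L -> R) sigma tau r c n :
  Frec a sigma tau r c n != 0 ->
  exists m, c m != 0 /\ (n + count (fun l => tau l == ord0) r =
                         m + count (fun l => sigma l == ord0) r)%N.
Proof.
elim: r n => [|l r IH] n /=; first by move=> H; exists n; rewrite !addn0.
move=> /Wop_supp [m1 [/IH [m [Hm E2]] E1]].
by exists m; split => //; move: E1 E2; set x := nat_of_bool _; set y := nat_of_bool _; set u := count _ r; set v := count _ r; lia.
Qed.

Lemma count_card (L : nat) (sigma : {ffun 'I_L -> 'I_2}) :
  count (fun l => sigma l == ord0) (enum 'I_L) = #|[pred l | sigma l == ord0]|.
Proof. by rewrite cardE /enum_mem size_filter /enum_mem count_filter; apply: eq_count => x; rewrite /= andbT. Qed.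

Lemma size_lin (R : numClosedFieldType) (b : R) (n : nat) :
  (size (0 + b%:P + 'X - n%:R : {poly R})%R <= 2)%N.
Proof.
have -> : (0 + b%:P + 'X - n%:R : {poly R}) = 'X + (b - n%:R)%:P.
  by rewrite polyCB polyC_natr; ring.
by rewrite size_XaddC.
Qed.

Lemma size_lin2 (R : numClosedFieldType) (n : nat) :
  (size ('X - n%:R : {poly R})%R <= 2)%N.
Proof. by rewrite -polyC_natr size_XsubC. Qed.

Lemma size_cst (R : numClosedFieldType) (b : R) (n : nat) :
  (size (0 + b%:P + n%:R : {poly R})%R <= 1)%N.
Proof. by rewrite add0r -polyC_natr -polyCD size_polyC leq_b1. Qed.

Lemma size_mul_bound (R : numClosedFieldType) (p q : {poly R}) e d :
  (size p <= e.+1)%N -> (size q <= d)%N -> (size (p * q)%R <= d + e)%N.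
Proof.
move=> Hp Hq; apply: leq_trans (size_polyMleq _ _) _.
case: (size p) Hp => [|sp] Hp; first by rewrite add0n; apply: leq_trans (leq_pred _) _; lia.
by rewrite addSn /= addnC leq_add // -ltnS.
Qed.

Lemma Frec_size (R : numClosedFieldType) (L : nat) (a : 'I_L -> R) sigma tau r c d :
  (forall m, size (c m : {poly R})%R <= d)%N ->
  forall n, (size (Frec a sigma tau r c n)%R <= d + count (fun l => sigma l == ord0) r)%N.
Proof.
move=> Hc; elim: r => [|l r IH] n /=; first by rewrite addn0.
rewrite /Wop.
case: (sigma l) => [[|[|i]] Hi] //; case: (tau l) => [[|[|j]] Hj] //=.
- rewrite addnCA addnC; apply: size_mul_bound; last exact: IH.
  exact: size_lin.
- rewrite addnCA addnC; case: n => [|m] /=; first by rewrite size_poly0.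
  apply: size_mul_bound; last exact: IH.
  exact: size_lin2.
- rewrite add0n -[(d + _)%N]addn0; apply: size_mul_bound; last exact: IH.
  by rewrite -polyC_natr size_polyC leq_b1.
- rewrite add0n -[(d + _)%N]addn0; apply: size_mul_bound; last exact: IH.
  exact: size_cst.
Qed.
Lemma count_cardT (L : nat) (p : pred 'I_L) :
  count p (enum 'I_L) = #|[pred l | p l]|.
Proof. by rewrite cardE /enum_mem size_filter /enum_mem count_filter; apply: eq_count => x; rewrite /= andbT. Qed.
Lemma count_lt_iota s t : count (fun i => (i < s)%N) (iota 0 (s + t)) = s.
Proof.
rewrite iotaD count_cat add0n.
rewrite (@eq_in_count _ _ predT (iota 0 s)); last by move=> x; rewrite mem_iota /=; lia.
rewrite (@eq_in_count _ _ pred0 (iota s t)); last by move=> x; rewrite mem_iota /=; lia.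
by rewrite count_predT count_pred0 size_iota addn0.
Qed.
Lemma card_lt (L s : nat) : (s <= L)%N -> count (fun l : 'I_L => (l < s)%N) (enum 'I_L) = s.
Proof.
move=> hs; rewrite -(count_map val (fun i => (i < s)%N)) val_enum_ord.
by rewrite -(subnKC hs) count_lt_iota.
Qed.

Lemma Frec_diag (R : numClosedFieldType) (L : nat) (a : 'I_L -> R)
  (ha : forall l, a l != 0) (sigma : {ffun 'I_L -> 'I_2}) r :
  (forall n, n != 0%N -> Frec a sigma sigma r (wvec R 0) n = 0) /\
  Frec a sigma sigma r (wvec R 0) 0 != 0 /\
  size (Frec a sigma sigma r (wvec R 0) 0) = (count (fun l => sigma l == ord0) r).+1.
Proof.
elim: r => [|l r [IH1 [IH2 IH3]]] /=.
  by rewrite /wvec /= oner_eq0 size_poly1; split => // n /negPf ->.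
rewrite /Wop; case: (sigma l) => [[|[|i]] Hi] //=.
- have E : (0 + (a l)%:P + 'X - 0%:R : {poly R}) = 'X + (a l)%:P by ring.
  have Hf : ('X + (a l)%:P : {poly R}) != 0 by rewrite -size_poly_eq0 size_XaddC.
  split; first by move=> n /IH1 ->; rewrite mulr0.
  rewrite E mulf_neq0 //; split => //.
  by rewrite size_mul // size_XaddC IH3.
- have E : (0 + (a l)%:P + 0%:R : {poly R}) = (a l)%:P by ring.
  have Hf : ((a l)%:P : {poly R}) != 0 by rewrite polyC_eq0.
  split; first by move=> n /IH1 ->; rewrite mulr0.
  rewrite E mulf_neq0 //; split => //.
  by rewrite size_mul // size_polyC ha IH3.
Qed.

Theorem mainTheorem15 (R : numClosedFieldType) (L : nat) (hL : (0 < L)%N)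
  (a : 'I_L -> R) (ha : forall l, a l != 0) (s : nat) (hs : (s <= L)%N) :
  (* V_L^s is stable under Q(z;p) (for every coefficient of p^k) *)
  (forall (k : nat) (sigma tau : {ffun 'I_L -> 'I_2}),
      inSector s tau -> Qcoef a k sigma tau != 0 -> inSector s sigma) /\
  (* Q(z;p)|_{V_L^s} has degree <= s in z *)
  (forall (k : nat) (sigma tau : {ffun 'I_L -> 'I_2}),
      inSector s sigma -> inSector s tau ->
      (size (Qcoef a k sigma tau) <= s.+1)%N) /\
  (* ... and its z^s coefficient (in End(V_L^s)[[p]]) is nonzero *)
  (exists (k : nat) (sigma tau : {ffun 'I_L -> 'I_2}),
      [/\ inSector s sigma, inSector s tau & size (Qcoef a k sigma tau) = s.+1]).
Proof.
split.
  move=> k sigma tau; rewrite /inSector -!count_card Qcoef_Frec.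
  move=> /eqP Ht /Frec_supp [m [Hm E]].
  have Emk : m = k.
    by move: Hm; rewrite /wvec; case: (m =P k) => // _; rewrite eqxx.
  subst m; apply/eqP; lia.
split.
  move=> k sigma tau; rewrite /inSector -count_card Qcoef_Frec => /eqP Hs _.
  rewrite -Hs -add1n; apply: Frec_size => m.
  by rewrite /wvec; case: eqP; rewrite ?size_poly1 ?size_poly0.
pose sigma := [ffun l : 'I_L => if (l < s)%N then (ord0 : 'I_2) else ord_max].
have Hsig : inSector s sigma.
  rewrite /inSector -count_card; apply/eqP; rewrite -[RHS](card_lt hs); apply: eq_count => l.
  by rewrite /sigma ffunE; case: ifP.
exists 0%N, sigma, sigma; split => //.
rewrite Qcoef_Frec; have [_ [_ ->]] := Frec_diag ha sigma (enum 'I_L).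
by move: Hsig; rewrite /inSector -count_card => /eqP ->.
Qed.
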